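(* Let $M$ be a model of the theory PrA of probability algebras. A nonempty closed set $D\subseteq M$ is definable with parameters from $M$ if and only if $D=[a,b]=\{x\in M: a\le x\le b\}$ for some $a,b\in M$ with $a\le b$.
   Context: PrA is the affine theory in the language $\{\wedge,\vee,{}',0,1,\mu\}$ (with metric $d$) axiomatized by: the axioms of Boolean algebras; $\mu(0)=0$, $\mu(1)=1$; $\mu(x)\le\mu(x\vee y)$; $\mu(x\wedge y)+\mu(x\vee y)=\mu(x)+\mu(y)$; $d(x,y)=\mu(x\triangle y)$. Models are complete metric spaces, so they are measure algebras of probability spaces (Dedekind complete Boolean algebras with a $\sigma$-additive strictly positive probability $\mu$), and $\le$ is the Boolean order. Affine formulas are built from $1$ and atomic formulas using only $r\cdot\phi$ ($r\in\mathbb R$), $\phi+\psi$, $\inf_x$, $\sup_x$. A predicate $P:M\to\mathbb R$ is definable with parameters if it is a uniform limit on $M$ of interpretations of affine formulas with parameters from $M$. A closed $D\subseteq M$ is definable with parameters if $x\mapsto d(x,D)=\inf_{a\in D}d(x,a)$ is definable with parameters. *)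

(* Defs.v *)
From HB Require Import structures.
From mathcomp Require Import all_boot all_order all_algebra.
From mathcomp Require Import boolp classical_sets reals Rstruct.
Set Implicit Arguments. Unset Strict Implicit. Unset Printing Implicit Defensive.
Import Order.TTheory GRing.Theory Num.Theory.
Local Open Scope ring_scope.
Local Open Scope classical_set_scope.

Notation RR := Rdefinitions.R.

Record ProbAlgebra := {
  pa_car :> Type;
  pa_meet : pa_car -> pa_car -> pa_car;
  pa_join : pa_car -> pa_car -> pa_car;
  pa_compl : pa_car -> pa_car;
  pa_zero : pa_car;
  pa_one : pa_car;
  pa_mu : pa_car -> RR;
  pa_meetC : forall x y, pa_meet x y = pa_meet y x;
  pa_joinC : forall x y, pa_join x y = pa_join y x;
  pa_meetA : forall x y z, pa_meet x (pa_meet y z) = pa_meet (pa_meet x y) z;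
  pa_joinA : forall x y z, pa_join x (pa_join y z) = pa_join (pa_join x y) z;
  pa_meetKU : forall x y, pa_meet x (pa_join x y) = x;
  pa_joinKI : forall x y, pa_join x (pa_meet x y) = x;
  pa_meetUr : forall x y z,
      pa_meet x (pa_join y z) = pa_join (pa_meet x y) (pa_meet x z);
  pa_joinIr : forall x y z,
      pa_join x (pa_meet y z) = pa_meet (pa_join x y) (pa_join x z);
  pa_meetCr : forall x, pa_meet x (pa_compl x) = pa_zero;
  pa_joinCr : forall x, pa_join x (pa_compl x) = pa_one;
  pa_mu0 : pa_mu pa_zero = 0;
  pa_mu1 : pa_mu pa_one = 1;
  pa_mu_mono : forall x y, pa_mu x <= pa_mu (pa_join x y);
  pa_mu_modular : forall x y,
      pa_mu (pa_meet x y) + pa_mu (pa_join x y) = pa_mu x + pa_mu y;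
  (* d(x,y) := mu (x symdiff y) is a metric (separation) ... *)
  pa_sep : forall x y,
      pa_mu (pa_join (pa_meet x (pa_compl y)) (pa_meet (pa_compl x) y)) = 0 ->
      x = y;
  (* ... and it is complete *)
  pa_complete : forall u : nat -> pa_car,
      (forall eps : RR, 0 < eps -> exists N, forall m n, (N <= m)%N -> (N <= n)%N ->
         pa_mu (pa_join (pa_meet (u m) (pa_compl (u n)))
                        (pa_meet (pa_compl (u m)) (u n))) < eps) ->
      exists l, forall eps : RR, 0 < eps -> exists N, forall n, (N <= n)%N ->
         pa_mu (pa_join (pa_meet (u n) (pa_compl l))
                        (pa_meet (pa_compl (u n)) l)) < eps
}.

Section Basic.
Variable M : ProbAlgebra.
Definition pa_symdiff (x y : M) : M :=
  pa_join (pa_meet x (pa_compl y)) (pa_meet (pa_compl x) y).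
Definition pa_d (x y : M) : RR := pa_mu (pa_symdiff x y).
Definition pa_le (x y : M) : Prop := pa_meet x y = x.
End Basic.

(* Terms of the language {/\, \/, ', 0, 1}, variables as de Bruijn indices. *)
Inductive term :=
| TVar of nat
| TMeet of term & term
| TJoin of term & term
| TCompl of term
| TZero
| TOne.

(* Affine formulas: built from 1 and atomic formulas mu(t), d(t,s)
   using r * phi, phi + psi, inf_x, sup_x (x = de Bruijn index 0). *)
Inductive formula :=
| FOne
| FMu of term
| FDist of term & term
| FScale of RR & formula
| FAdd of formula & formula
| FInf of formula
| FSup of formula.

Definition scons (T : Type) (a : T) (e : nat -> T) : nat -> T :=
  fun n => match n with O => a | S k => e k end.

Fixpoint teval (M : ProbAlgebra) (e : nat -> M) (t : term) : M :=
  match t with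
  | TVar n => e n
  | TMeet t1 t2 => pa_meet (teval e t1) (teval e t2)
  | TJoin t1 t2 => pa_join (teval e t1) (teval e t2)
  | TCompl t1 => pa_compl (teval e t1)
  | TZero => pa_zero M
  | TOne => pa_one M
  end.

(* Interpretation in M (inf/sup over M are the real inf/sup; all formulas
   are bounded on a probability algebra). *)
Fixpoint feval (M : ProbAlgebra) (e : nat -> M) (phi : formula) : RR :=
  match phi with
  | FOne => 1
  | FMu t => pa_mu (teval e t)
  | FDist t s => pa_d (teval e t) (teval e s)
  | FScale r psi => r * feval e psi
  | FAdd psi chi => feval e psi + feval e chi
  | FInf psi => inf [set feval (scons a e) psi | a in [set: M]]
  | FSup psi => sup [set feval (scons a e) psi | a in [set: M]]
  end.

(* P : M -> R is definable with parameters: uniform limit of interpretations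
   of affine formulas phi(x, params) -- x is variable 0, the remaining
   variables are assigned parameters from M by e. *)
Definition definable_pred (M : ProbAlgebra) (P : M -> RR) : Prop :=
  forall eps : RR, 0 < eps ->
    exists (phi : formula) (e : nat -> M),
      forall x : M, `|P x - feval (scons x e) phi| <= eps.

Definition dist_to_set (M : ProbAlgebra) (D : set M) (x : M) : RR :=
  inf [set pa_d x a | a in D].

Definition definable_set (M : ProbAlgebra) (D : set M) : Prop :=
  definable_pred (dist_to_set D).

Definition pa_closed (M : ProbAlgebra) (D : set M) : Prop :=
  forall x : M, (forall eps : RR, 0 < eps -> exists2 a, D a & pa_d x a < eps) -> D x.

Definition pa_interval (M : ProbAlgebra) (a b : M) : set M :=
  [set x | pa_le a x /\ pa_le x b].

(* Main.v *)
Require Import Defs.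
From mathcomp Require Import all_boot all_order all_algebra.
From mathcomp Require Import boolp classical_sets reals Rstruct lra.
Set Implicit Arguments. Unset Strict Implicit. Unset Printing Implicit Defensive.
Import Order.TTheory GRing.Theory Num.Theory.
Local Open Scope ring_scope.
Local Open Scope classical_set_scope.

Section BA.
Variable M : ProbAlgebra.
Local Notation "x ⊓ y" := (@pa_meet M x y) (at level 40, left associativity).
Local Notation "x ⊔ y" := (@pa_join M x y) (at level 50, left associativity).
Local Notation "¬ x" := (@pa_compl M x) (at level 35, right associativity).
Local Notation "⊥" := (pa_zero M).
Local Notation "⊤" := (pa_one M).
Implicit Types x y z a b c u v : M.

Lemma b_meetxx x : x ⊓ x = x.
Proof. by rewrite -{2}[x](pa_joinKI x x) pa_meetKU. Qed.
Lemma b_joinxx x : x ⊔ x = x.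
Proof. by rewrite -{2}[x](pa_meetKU x x) pa_joinKI. Qed.
Lemma b_meetx0 x : x ⊓ ⊥ = ⊥.
Proof. by rewrite -(pa_meetCr x) pa_meetA b_meetxx. Qed.
Lemma b_meet0x x : ⊥ ⊓ x = ⊥.
Proof. by rewrite pa_meetC b_meetx0. Qed.
Lemma b_joinx0 x : x ⊔ ⊥ = x.
Proof. by rewrite -(pa_meetCr x) pa_joinKI. Qed.
Lemma b_join0x x : ⊥ ⊔ x = x.
Proof. by rewrite pa_joinC b_joinx0. Qed.
Lemma b_meetx1 x : x ⊓ ⊤ = x.
Proof. by rewrite -(pa_joinCr x) pa_meetKU. Qed.
Lemma b_meet1x x : ⊤ ⊓ x = x.
Proof. by rewrite pa_meetC b_meetx1. Qed.
Lemma b_joinx1 x : x ⊔ ⊤ = ⊤.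
Proof. by rewrite -(pa_joinCr x) pa_joinA b_joinxx. Qed.
Lemma b_join1x x : ⊤ ⊔ x = ⊤.
Proof. by rewrite pa_joinC b_joinx1. Qed.
Lemma b_meetUl x y z : (x ⊔ y) ⊓ z = x ⊓ z ⊔ y ⊓ z.
Proof. by rewrite pa_meetC pa_meetUr (pa_meetC z x) (pa_meetC z y). Qed.
Lemma b_joinIl x y z : (x ⊓ y) ⊔ z = (x ⊔ z) ⊓ (y ⊔ z).
Proof. by rewrite pa_joinC pa_joinIr (pa_joinC z x) (pa_joinC z y). Qed.
Lemma b_meetCl x : ¬ x ⊓ x = ⊥.
Proof. by rewrite pa_meetC pa_meetCr. Qed.
Lemma b_joinCl x : ¬ x ⊔ x = ⊤.
Proof. by rewrite pa_joinC pa_joinCr. Qed.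
Lemma b_meetACA a b c u : (a ⊓ b) ⊓ (c ⊓ u) = (a ⊓ c) ⊓ (b ⊓ u).
Proof.
by rewrite -!pa_meetA (pa_meetA b c u) (pa_meetC b c) -(pa_meetA c b u).
Qed.
Lemma b_meetAC a b c : a ⊓ b ⊓ c = a ⊓ c ⊓ b.
Proof. by rewrite -!pa_meetA (pa_meetC b c). Qed.
Lemma b_meetCA a b c : a ⊓ (b ⊓ c) = b ⊓ (a ⊓ c).
Proof. by rewrite !pa_meetA (pa_meetC a b). Qed.
Lemma b_joinCA a b c : a ⊔ (b ⊔ c) = b ⊔ (a ⊔ c).
Proof. by rewrite !pa_joinA (pa_joinC a b). Qed.

Lemma b_compl_unique x y : x ⊓ y = ⊥ -> x ⊔ y = ⊤ -> y = ¬ x.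
Proof.
move=> h1 h2.
have e1 : y = y ⊓ ¬ x.
  by rewrite -{1}[y]b_meetx1 -(pa_joinCr x) pa_meetUr pa_meetC h1 b_join0x.
have e2 : ¬ x = ¬ x ⊓ y.
  by rewrite -{1}[¬ x]b_meetx1 -h2 pa_meetUr b_meetCl b_join0x.
by rewrite e1 [in RHS]e2 pa_meetC.
Qed.
Lemma b_complK x : ¬ ¬ x = x.
Proof. by rewrite -(b_compl_unique (b_meetCl x) (b_joinCl x)). Qed.
Lemma b_compl0 : ¬ ⊥ = ⊤.
Proof. by rewrite -(@b_compl_unique ⊥ ⊤) ?b_meet0x ?b_join0x. Qed.
Lemma b_compl1 : ¬ ⊤ = ⊥.
Proof. by rewrite -b_compl0 b_complK. Qed.
Lemma b_complI x y : ¬ (x ⊓ y) = ¬ x ⊔ ¬ y.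
Proof.
symmetry; apply: b_compl_unique.
  by rewrite pa_meetUr b_meetAC pa_meetCr b_meet0x b_join0x -pa_meetA pa_meetCr b_meetx0.
rewrite b_joinIl (pa_joinA x) pa_joinCr b_join1x (b_joinCA y) pa_joinCr b_joinx1.
by rewrite b_meetxx.
Qed.
Lemma b_complU x y : ¬ (x ⊔ y) = ¬ x ⊓ ¬ y.
Proof. by rewrite -{1}[x]b_complK -{1}[y]b_complK -b_complI b_complK. Qed.

Lemma split_c c x : x = x ⊓ c ⊔ x ⊓ ¬ c.
Proof. by rewrite -pa_meetUr pa_joinCr b_meetx1. Qed.
Lemma eq_split c x y : x ⊓ c = y ⊓ c -> x ⊓ ¬ c = y ⊓ ¬ c -> x = y.
Proof. by move=> h1 h2; rewrite (split_c c x) (split_c c y) h1 h2. Qed.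
Lemma meet_distr_c a b c : (a ⊓ b) ⊓ c = (a ⊓ c) ⊓ (b ⊓ c).
Proof. by rewrite b_meetACA b_meetxx. Qed.
Lemma compl_c c x : ¬ x ⊓ c = ¬ (x ⊓ c) ⊓ c.
Proof. by rewrite b_complI b_meetUl b_meetCl b_joinx0. Qed.

Definition mix c u v := u ⊓ c ⊔ v ⊓ ¬ c.
Lemma mix_c c u v : mix c u v ⊓ c = u ⊓ c.
Proof.
by rewrite /mix b_meetUl -!pa_meetA b_meetxx b_meetCl b_meetx0 b_joinx0.
Qed.
Lemma mix_nc c u v : mix c u v ⊓ ¬ c = v ⊓ ¬ c.
Proof.
by rewrite /mix b_meetUl -!pa_meetA b_meetxx pa_meetCr b_meetx0 b_join0x.
Qed.
Lemma mixxx c u : mix c u u = u.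
Proof. by apply: (@eq_split c); rewrite ?mix_c ?mix_nc. Qed.
Lemma meet_mix c u1 v1 u2 v2 :
  mix c u1 v1 ⊓ mix c u2 v2 = mix c (u1 ⊓ u2) (v1 ⊓ v2).
Proof.
apply: (@eq_split c).
  by rewrite meet_distr_c !mix_c -meet_distr_c.
by rewrite meet_distr_c !mix_nc -meet_distr_c.
Qed.
Lemma join_mix c u1 v1 u2 v2 :
  mix c u1 v1 ⊔ mix c u2 v2 = mix c (u1 ⊔ u2) (v1 ⊔ v2).
Proof.
apply: (@eq_split c).
  by rewrite b_meetUl !mix_c -b_meetUl.
by rewrite b_meetUl !mix_nc -b_meetUl.
Qed.
Lemma compl_mix c u v : ¬ mix c u v = mix c (¬ u) (¬ v).
Proof.
apply: (@eq_split c); first by rewrite mix_c compl_c mix_c -compl_c.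
by rewrite mix_nc compl_c mix_nc -compl_c.
Qed.

Lemma b_le_meet x y : pa_le x y -> x ⊓ y = x. Proof. by []. Qed.
Lemma b_lexx x : pa_le x x. Proof. exact: b_meetxx. Qed.
Lemma b_le_meet2 a b c u : pa_le a b -> pa_le c u -> pa_le (a ⊓ c) (b ⊓ u).
Proof. by rewrite /pa_le => h1 h2; rewrite b_meetACA h1 h2. Qed.
Lemma b_le_join x y : pa_le x y -> x ⊔ y = y.
Proof. by rewrite /pa_le => h; rewrite -h pa_joinC pa_meetC pa_joinKI. Qed.
Lemma b_le_compl x y : pa_le x y -> pa_le (¬ y) (¬ x).
Proof. by move=> h; rewrite /pa_le -b_complU pa_joinC b_le_join. Qed.


Local Notation mu := (@pa_mu M).
Lemma mu_ge0 x : 0 <= mu x.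
Proof. by have := pa_mu_mono ⊥ x; rewrite b_join0x pa_mu0. Qed.
Lemma mu_le x y : pa_le x y -> mu x <= mu y.
Proof. by move=> h; have := pa_mu_mono x y; rewrite b_le_join. Qed.
Lemma mu_le1 x : mu x <= 1.
Proof. by have := pa_mu_mono x (¬ x); rewrite pa_joinCr pa_mu1. Qed.
Lemma mu_disj x y : x ⊓ y = ⊥ -> mu (x ⊔ y) = mu x + mu y.
Proof. by move=> h; have := pa_mu_modular x y; rewrite h pa_mu0 add0r. Qed.
Lemma mu_split c x : mu x = mu (x ⊓ c) + mu (x ⊓ ¬ c).
Proof.
by rewrite {1}(split_c c x) mu_disj // b_meetACA b_meetxx pa_meetCr b_meetx0.
Qed.
Lemma d_E x y : pa_d x y = mu (x ⊓ ¬ y) + mu (¬ x ⊓ y).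
Proof.
by rewrite /pa_d /pa_symdiff mu_disj // b_meetACA pa_meetCr b_meetCl b_meetxx.
Qed.
Lemma d_ge0 x y : 0 <= pa_d x y.
Proof. by rewrite d_E addr_ge0 ?mu_ge0. Qed.
Lemma d_sym x y : pa_d x y = pa_d y x.
Proof. by rewrite !d_E addrC (pa_meetC (¬ y)) (pa_meetC y). Qed.
Lemma d_xx x : pa_d x x = 0.
Proof. by rewrite d_E pa_meetCr b_meetCl pa_mu0 addr0. Qed.
Lemma d_eq0 x y : pa_d x y = 0 -> x = y.
Proof. exact: pa_sep. Qed.
Lemma d_compl x y : pa_d (¬ x) (¬ y) = pa_d x y.
Proof. by rewrite !d_E !b_complK addrC (pa_meetC (¬ x)) (pa_meetC x). Qed.
Lemma d_le x y : pa_le y x -> pa_d x y = mu x - mu y.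
Proof.
move=> h; rewrite d_E -{2}h b_meetCA b_meetCl b_meetx0 pa_mu0 addr0.
rewrite (mu_split y x) (pa_meetC x y) h; lra.
Qed.
Lemma mu_lip x y : mu x <= mu y + pa_d y x.
Proof.
rewrite (mu_split y x) d_E (pa_meetC (¬ y) x).
have h1 : mu (x ⊓ y) <= mu y by apply: mu_le; rewrite /pa_le -pa_meetA b_meetxx.
have h2 := mu_ge0 (y ⊓ ¬ x); lra.
Qed.
Lemma mu_mix c u v : mu (mix c u v) = mu (u ⊓ c) + mu (v ⊓ ¬ c).
Proof. by rewrite (mu_split c (mix c u v)) mix_c mix_nc. Qed.
Lemma mu_exch c u v : mu (mix c u v) + mu (mix c v u) = mu u + mu v.
Proof. rewrite !mu_mix (mu_split c u) (mu_split c v); lra. Qed.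
Lemma symdiff_mix c u1 v1 u2 v2 :
  pa_symdiff (mix c u1 v1) (mix c u2 v2) = mix c (pa_symdiff u1 u2) (pa_symdiff v1 v2).
Proof. by rewrite /pa_symdiff !compl_mix !meet_mix join_mix. Qed.
Lemma d_exch c u1 v1 u2 v2 :
  pa_d (mix c u1 v1) (mix c u2 v2) + pa_d (mix c v1 u1) (mix c v2 u2) =
  pa_d u1 u2 + pa_d v1 v2.
Proof. by rewrite /pa_d !symdiff_mix mu_exch. Qed.
Lemma mix_mix c u v : mix c (mix c u v) (mix c v u) = u.
Proof.
by apply: (@eq_split c); rewrite ?mix_c ?mix_nc.
Qed.
Lemma mix_join x y : mix x x y = x ⊔ y.
Proof.
apply: (@eq_split x); rewrite ?mix_c ?mix_nc b_meetUl.
  by rewrite b_meetxx pa_meetC pa_joinKI.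
by rewrite pa_meetCr b_join0x.
Qed.
Lemma mix_meet x y : mix x y x = y ⊓ x.
Proof.
apply: (@eq_split x); rewrite ?mix_c ?mix_nc.
  by rewrite -pa_meetA b_meetxx.
by rewrite -pa_meetA pa_meetCr b_meetx0.
Qed.
Lemma mix_conv x y z : pa_le x z -> pa_le z y -> mix z y x = z.
Proof.
move=> h1 h2; apply: (@eq_split z); rewrite ?mix_c ?mix_nc.
  by rewrite pa_meetC h2 b_meetxx.
by rewrite pa_meetCr -[x]h1 -pa_meetA pa_meetCr b_meetx0.
Qed.
Lemma pa_le_trans x y z : pa_le x y -> pa_le y z -> pa_le x z.
Proof. by rewrite /pa_le => h1 h2; rewrite -h1 -pa_meetA h2. Qed.

Lemma interval_lb a b x y : pa_le a y -> pa_le y b ->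
  mu (x ⊓ ¬ b) + mu (¬ x ⊓ a) <= pa_d x y.
Proof.
move=> h1 h2; rewrite d_E.
have e1 : mu (x ⊓ ¬ b) <= mu (x ⊓ ¬ y) by apply/mu_le/b_le_meet2; [apply: b_lexx| apply: b_le_compl].
have e2 : mu (¬ x ⊓ a) <= mu (¬ x ⊓ y) by apply/mu_le/b_le_meet2; [apply: b_lexx| ].
lra.
Qed.
Lemma interval_att a b x : pa_le a b ->
  let y := (x ⊔ a) ⊓ b in
  [/\ pa_le a y, pa_le y b & pa_d x y = mu (x ⊓ ¬ b) + mu (¬ x ⊓ a)].
Proof.
move=> hab y; split.
- by rewrite /pa_le /y pa_meetA (pa_joinC x) pa_meetKU.
- by rewrite /pa_le /y -pa_meetA b_meetxx.
rewrite d_E /y b_complI b_complU pa_meetUr pa_meetA pa_meetCr b_meet0x b_join0x.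
by rewrite pa_meetA pa_meetUr b_meetCl b_join0x -pa_meetA hab.
Qed.
End BA.

Section Reals.
Variable T : Type.
Variable t0 : T.
Implicit Types f g h k : T -> RR.
Local Notation img f := [set f a | a in [set: T]].

Lemma img_has_sup f B : (forall a, f a <= B) -> has_sup (img f).
Proof.
move=> hB; split; first by exists (f t0), t0.
by exists B => _ [a _ <-].
Qed.
Lemma img_has_inf f B : (forall a, B <= f a) -> has_inf (img f).
Proof.
move=> hB; split; first by exists (f t0), t0.
by exists B => _ [a _ <-].
Qed.
Lemma sup_img_ge f B a : (forall a, f a <= B) -> f a <= sup (img f).
Proof. by move=> hB; apply: (sup_upper_bound (img_has_sup hB)); exists a. Qed.
Lemma sup_img_le f B : (forall a, f a <= B) -> sup (img f) <= B.
Proof. by move=> hB; apply: ge_sup; [exists (f t0), t0 | move=> _ [a _ <-]]. Qed.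
Lemma inf_img_le f B a : (forall a, B <= f a) -> inf (img f) <= f a.
Proof.
move=> hB; apply: ge_inf; last by exists a.
by exists B => _ [b _ <-].
Qed.
Lemma inf_img_ge f B : (forall a, B <= f a) -> B <= inf (img f).
Proof. by move=> hB; apply: lb_le_inf; [exists (f t0), t0 | move=> _ [a _ <-]]. Qed.

Lemma sup_cmp f g h k B :
  (forall a, f a <= B) -> (forall a, g a <= B) ->
  (forall a, h a <= B) -> (forall a, k a <= B) ->
  (forall a b, exists a2 b2, f a + g b <= h a2 + k b2) ->
  sup (img f) + sup (img g) <= sup (img h) + sup (img k).
Proof.
move=> hf hg hh hk H; apply/ler_addgt0Pr => e e0.
have e2 : 0 < e / 2 by rewrite divr_gt0.
have [_ [a _ <-] ha] := sup_adherent e2 (img_has_sup hf).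
have [_ [b _ <-] hb] := sup_adherent e2 (img_has_sup hg).
have [a2 [b2 hab]] := H a b.
have := sup_img_ge a2 hh; have := sup_img_ge b2 hk.
lra.
Qed.
Lemma inf_cmp f g h k B :
  (forall a, B <= f a) -> (forall a, B <= g a) ->
  (forall a, B <= h a) -> (forall a, B <= k a) ->
  (forall a b, exists a2 b2, h a2 + k b2 <= f a + g b) ->
  inf (img h) + inf (img k) <= inf (img f) + inf (img g).
Proof.
move=> hf hg hh hk H; apply/ler_addgt0Pr => e e0.
have e2 : 0 < e / 2 by rewrite divr_gt0.
have [_ [a _ <-] ha] := inf_adherent e2 (img_has_inf hf).
have [_ [b _ <-] hb] := inf_adherent e2 (img_has_inf hg).
have [a2 [b2 hab]] := H a b.
have := inf_img_le a2 hh; have := inf_img_le b2 hk.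
lra.
Qed.
End Reals.

Section F.
Variable M : ProbAlgebra.
Definition mixe c (e f : nat -> M) := fun n => mix c (e n) (f n).
Lemma teval_mix c e f t : teval (mixe c e f) t = mix c (teval e t) (teval f t).
Proof.
elim: t => [n|t1 IH1 t2 IH2|t1 IH1 t2 IH2|t1 IH1||] //=.
- by rewrite IH1 IH2 meet_mix.
- by rewrite IH1 IH2 join_mix.
- by rewrite IH1 compl_mix.
- by rewrite mixxx.
- by rewrite mixxx.
Qed.
Lemma mixe_scons c x y e f :
  mixe c (scons x e) (scons y f) = scons (mix c x y) (mixe c e f).
Proof. by apply: funext => -[|n]. Qed.
Lemma mixe_xx c e : mixe c e e = e.
Proof. by apply: funext => n; rewrite /mixe mixxx. Qed.

Lemma feval_bound phi : exists B, forall e : nat -> M, `|feval e phi| <= B.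
Proof.
elim: phi => [|t|t s|r psi [B hB]|psi [B1 h1] chi [B2 h2]|psi [B hB]|psi [B hB]].
- by exists 1 => e /=; rewrite normr1.
- exists 1 => e /=; rewrite ger0_norm ?mu_ge0 ?mu_le1 //.
- exists 1 => e /=; rewrite /pa_d ger0_norm ?mu_ge0 ?mu_le1 //.
- exists (`|r| * B) => e /=; rewrite normrM ler_wpM2l //.
- exists (B1 + B2) => e /=; apply: (le_trans (ler_normD _ _)); exact: lerD.
- exists B => e /=.
  have hl : forall a, - B <= feval (scons a e) psi by move=> a; have := hB (scons a e); rewrite ler_norml => /andP[].
  have hu : forall a, feval (scons a e) psi <= B by move=> a; have := hB (scons a e); rewrite ler_norml => /andP[].
  rewrite ler_norml (inf_img_ge (pa_zero M) hl) /=.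
  exact: (le_trans (inf_img_le (pa_zero M) hl) (hu _)).
- exists B => e /=.
  have hl : forall a, - B <= feval (scons a e) psi by move=> a; have := hB (scons a e); rewrite ler_norml => /andP[].
  have hu : forall a, feval (scons a e) psi <= B by move=> a; have := hB (scons a e); rewrite ler_norml => /andP[].
  rewrite ler_norml (sup_img_le (pa_zero M) hu) andbT.
  exact: (le_trans (hl (pa_zero M)) (sup_img_ge (pa_zero M) (pa_zero M) hu)).
Qed.

Lemma feval_mix c phi : forall e f,
  feval (mixe c e f) phi + feval (mixe c f e) phi = feval e phi + feval f phi.
Proof.
elim: phi => [|t|t s|r psi IH|psi IH1 chi IH2|psi IH|psi IH] e f /=.
- done.
- by rewrite !teval_mix mu_exch.
- by rewrite !teval_mix d_exch.
- by rewrite -!mulrDr IH.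
- have := IH1 e f; have := IH2 e f; lra.
- have [B hB] := feval_bound psi.
  have hl : forall (g : nat -> M) (a : M), - B <= feval (scons a g) psi.
    by move=> g a; have := hB (scons a g); rewrite ler_norml => /andP[].
  apply/le_anti/andP; split.
  + apply: (inf_cmp (pa_zero M) (hl _) (hl _) (hl _) (hl _)) => a b.
    exists (mix c a b), (mix c b a).
    by rewrite -(IH (scons a e) (scons b f)) !mixe_scons.
  + apply: (inf_cmp (pa_zero M) (hl _) (hl _) (hl _) (hl _)) => a b.
    exists (mix c a b), (mix c b a).
    by rewrite -(IH (scons (mix c a b) e) (scons (mix c b a) f)) !mixe_scons !mix_mix.
- have [B hB] := feval_bound psi.
  have hu : forall (g : nat -> M) (a : M), feval (scons a g) psi <= B.
    by move=> g a; have := hB (scons a g); rewrite ler_norml => /andP[].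
  apply/le_anti/andP; split.
  + apply: (sup_cmp (pa_zero M) (hu _) (hu _) (hu _) (hu _)) => a b.
    exists (mix c a b), (mix c b a).
    by rewrite -(IH (scons (mix c a b) e) (scons (mix c b a) f)) !mixe_scons !mix_mix.
  + apply: (sup_cmp (pa_zero M) (hu _) (hu _) (hu _) (hu _)) => a b.
    exists (mix c a b), (mix c b a).
    by rewrite -(IH (scons a e) (scons b f)) !mixe_scons.
Qed.

Lemma def_exch (P : M -> RR) : definable_pred P ->
  forall c x y, P (mix c x y) + P (mix c y x) = P x + P y.
Proof.
move=> hP c x y.
have H : forall u v w z : M, (forall e : RR, 0 < e -> P u + P v <= P w + P z + e) ->
           (forall e : RR, 0 < e -> P w + P z <= P u + P v + e) -> P u + P v = P w + P z.
  move=> u v w z h1 h2; apply/le_anti/andP; split; apply/ler_addgt0Pr; [exact: h1|exact: h2].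
apply: H.
  all: move=> e e0; have e4 : 0 < e / 4 by rewrite divr_gt0.
  all: have [phi [ev hev]] := hP _ e4.
  all: have := feval_mix c phi (scons x ev) (scons y ev).
  all: rewrite !mixe_scons mixe_xx.
  all: have := hev x; have := hev y; have := hev (mix c x y); have := hev (mix c y x).
  all: rewrite !ler_norml => /andP[? ?] /andP[? ?] /andP[? ?] /andP[? ?]; lra.
Qed.
End F.

Fixpoint meets (M : ProbAlgebra) (xs : nat -> M) (n : nat) : M :=
  match n with O => xs O | S k => pa_meet (meets xs k) (xs (S k)) end.

Section D.
Variable M : ProbAlgebra.
Implicit Types (D : set M) (x y z : M).

Lemma dist_has_inf D x : D !=set0 -> has_inf [set pa_d x a | a in D].
Proof.
move=> [a Da]; split; first by exists (pa_d x a), a.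
by exists 0 => _ [b _ <-]; exact: d_ge0.
Qed.
Lemma dist_ge0 D x : D !=set0 -> 0 <= dist_to_set D x.
Proof.
move=> [a Da]; apply: lb_le_inf; first by exists (pa_d x a), a.
by move=> _ [b _ <-]; exact: d_ge0.
Qed.
Lemma dist_in D x : D x -> dist_to_set D x = 0.
Proof.
move=> Dx; apply/le_anti/andP; split; last by apply: dist_ge0; exists x.
rewrite -(d_xx x); apply: (ge_inf (dist_has_inf x _).2); last by exists x.
by exists x.
Qed.
Lemma dist_zero D x : D !=set0 -> pa_closed D -> dist_to_set D x <= 0 -> D x.
Proof.
move=> hne hcl h; apply: hcl => eps e0.
have [_ [a Da <-] ha] := inf_adherent e0 (dist_has_inf x hne).
exists a => //; rewrite /dist_to_set in h; lra.
Qed.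

Lemma inv_le (k n : nat) : (k <= n)%N -> (n.+1%:R^-1 : RR) <= k.+1%:R^-1.
Proof. by move=> h; rewrite lef_pV2 ?posrE ?ltr0Sn // ler_nat ltnS. Qed.

Lemma min_exists D : D !=set0 -> pa_closed D ->
  (forall x y, D x -> D y -> D (pa_meet x y)) ->
  exists2 l, D l & forall z, D z -> pa_le l z.
Proof.
move=> [x0 Dx0] hcl hI.
pose S := [set pa_mu x | x in D].
have hS : has_inf S.
  split; first by exists (pa_mu x0), x0.
  by exists 0 => _ [a _ <-]; exact: mu_ge0.
pose m := inf S.
have mS : m = inf S by [].
clearbody m.
have mle : forall z, D z -> m <= pa_mu z.
  by move=> z Dz; rewrite mS; apply: (ge_inf hS.2); exists z.
have hx : forall n : nat, exists x, D x /\ pa_mu x < m + (n.+1%:R)^-1.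
  move=> n; have hp : 0 < (n.+1%:R)^-1 :> RR by rewrite invr_gt0 ltr0Sn.
  by have [_ [x Dx <-] h] := inf_adherent hp hS; exists x; rewrite mS.
have [xs hxs] := choice hx.
have Dys : forall n, D (meets xs n).
  by elim => [|n IH] /=; [exact: (hxs 0%N).1 | exact: hI IH (hxs _).1].
have ys_le_xs : forall n, pa_le (meets xs n) (xs n).
  by case => [|n] /=; [exact: b_lexx | rewrite /pa_le -pa_meetA b_meetxx].
have ys_dec : forall n, pa_le (meets xs n.+1) (meets xs n).
  by move=> n; rewrite /pa_le /= b_meetAC b_meetxx.
have ys_mono : forall k d, pa_le (meets xs (k + d)) (meets xs k).
  move=> k; elim => [|d IH]; first by rewrite addn0; exact: b_lexx.
  by rewrite addnS; exact: pa_le_trans (ys_dec _) IH.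
have ys_mono' : forall k n, (k <= n)%N -> pa_le (meets xs n) (meets xs k).
  by move=> k n /subnKC <-; exact: ys_mono.
have mu_lo : forall n, m <= pa_mu (meets xs n) by move=> n; exact: mle.
have mu_hi : forall n, pa_mu (meets xs n) < m + n.+1%:R^-1.
  by move=> n; exact: le_lt_trans (mu_le (ys_le_xs n)) (hxs n).2.
have dist_ys : forall N m1 n1, (N <= m1)%N -> (N <= n1)%N ->
    pa_d (meets xs m1) (meets xs n1) < N.+1%:R^-1.
  move=> N m1 n1 hm hn; wlog h : m1 n1 hm hn / (m1 <= n1)%N.
    move=> W; case: (leqP m1 n1) => h; first exact: W.
    by rewrite d_sym; apply: W => //; exact: ltnW.
  rewrite d_le; last exact: ys_mono' h.
  have := mu_hi m1; have := mu_lo n1; have := inv_le hm.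
  set p := (m1.+1%:R^-1 : RR); set q := (N.+1%:R^-1 : RR); clearbody p q; lra.
have [l hl] : exists l, forall eps : RR, 0 < eps -> exists N, forall n, (N <= n)%N ->
    pa_d (meets xs n) l < eps.
  apply: (@pa_complete M (meets xs)) => eps e0.
  have [N hN] := ltr_add_invr e0.
  exists N => m1 n1 hm hn; apply: lt_trans (dist_ys N m1 n1 hm hn) _; by rewrite add0r in hN.
have Dl : D l.
  apply: hcl => eps e0; have [N hN] := hl eps e0; exists (meets xs N) => //.
  by rewrite d_sym; exact: hN.
have mul : pa_mu l <= m.
  apply/ler_addgt0Pr => eps e0.
  have e2 : 0 < eps / 2 by rewrite divr_gt0.
  have [N hN] := hl _ e2; have [K hK] := ltr_add_invr e2.
  have := mu_lip l (meets xs (maxn N K)); have := hN (maxn N K) (leq_maxl _ _).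
  have := mu_hi (maxn N K); have := inv_le (leq_maxr N K); move: hK.
  set p := ((maxn N K).+1%:R^-1 : RR); set q := (K.+1%:R^-1 : RR); clearbody p q; lra.
exists l => // z Dz.
have Dlz := hI _ _ Dl Dz.
have le1 : pa_le (pa_meet l z) l by rewrite /pa_le b_meetAC b_meetxx.
have h0 : pa_d l (pa_meet l z) = 0.
  apply/le_anti/andP; split; last exact: d_ge0.
  rewrite d_le //; have := mle _ Dlz; lra.
by rewrite /pa_le -(d_eq0 h0).
Qed.

Lemma max_exists D : D !=set0 -> pa_closed D ->
  (forall x y, D x -> D y -> D (pa_join x y)) ->
  exists2 u, D u & forall z, D z -> pa_le z u.
Proof.
move=> [x0 Dx0] hcl hU.
have h1 : [set x | D (pa_compl x)] !=set0 by exists (pa_compl x0); rewrite /= b_complK.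
have h2 : pa_closed [set x | D (pa_compl x)].
  move=> x hx; apply: hcl => eps e0; have [a Da h] := hx eps e0.
  by exists (pa_compl a) => //; rewrite d_compl.
have h3 : forall x y, [set x | D (pa_compl x)] x -> [set x | D (pa_compl x)] y ->
    [set x | D (pa_compl x)] (pa_meet x y).
  by move=> x y Dx Dy; rewrite /= b_complI; exact: hU.
have [l Dl hl] := min_exists h1 h2 h3.
exists (pa_compl l) => // z Dz.
have : pa_le l (pa_compl z) by apply: hl; rewrite /= b_complK.
by move/b_le_compl; rewrite b_complK.
Qed.
End D.

Theorem mainTheorem6 (M : ProbAlgebra) (D : set M) :
  D !=set0 -> pa_closed D ->
  (definable_set D <->
   exists a b : M, pa_le a b /\ D = pa_interval a b).
Proof.
move=> hne hcl; split.
- move=> hdef.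
  have ex := def_exch hdef.
  have Pge0 x : 0 <= dist_to_set D x by exact: dist_ge0.
  have hI x y : D x -> D y -> D (pa_meet x y).
    move=> Dx Dy; have := ex y y x; rewrite mix_join mix_meet (dist_in Dx) (dist_in Dy) addr0.
    move=> h; apply: dist_zero => //; have := Pge0 (pa_join y x); lra.
  have hU x y : D x -> D y -> D (pa_join x y).
    move=> Dx Dy; have := ex x x y; rewrite mix_join mix_meet (dist_in Dx) (dist_in Dy) addr0.
    move=> h; apply: dist_zero => //; have := Pge0 (pa_meet y x); lra.
  have [a Da ha] := min_exists hne hcl hI.
  have [b Db hb] := max_exists hne hcl hU.
  exists a, b; split; first exact: ha.
  apply/seteqP; split => z.
  + by move=> Dz; split; [exact: ha | exact: hb].
  + move=> [h1 h2]; have := ex z b a; rewrite (mix_conv h1 h2) (dist_in Da) (dist_in Db) addr0.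
    move=> h; apply: dist_zero => //; have := Pge0 (mix z a b); lra.
- move=> [a [b [hab ->]]] eps e0.
  exists (FAdd (FMu (TMeet (TVar 0) (TCompl (TVar 2)))) (FMu (TMeet (TCompl (TVar 0)) (TVar 1)))).
  exists (scons a (scons b (fun _ => a))) => x.
  suff -> : dist_to_set (pa_interval a b) x =
      pa_mu (pa_meet x (pa_compl b)) + pa_mu (pa_meet (pa_compl x) a).
    by rewrite /= subrr normr0 ltW.
  have [h1 h2 h3] := interval_att x hab.
  rewrite /dist_to_set; apply/le_anti/andP; split.
  + rewrite -h3; apply: ge_inf; first by exists 0 => _ [y _ <-]; exact: d_ge0.
    by exists (pa_meet (pa_join x a) b).
  + apply: lb_le_inf; first by exists (pa_d x a), a => //; split; [exact: b_lexx|].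
    by move=> _ [y [y1 y2] <-]; exact: interval_lb.
Qed.
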